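(* Let $\theta,\eta\in(0,\tfrac{\pi}{4}]$, and let the four qubits $A,C_1,C_2,B$ be in the state $|\Phi_\theta\rangle_{AC_1}\otimes|\Phi_\eta\rangle_{C_2B}$. Let $|\varphi\rangle\in\mathbb{C}^2\otimes\mathbb{C}^2$ be a unit vector on Clare's system $C_1C_2$ such that, conditioned on Clare's system being projected onto $|\varphi\rangle$, the resulting (normalized) state of Alice and Bob's qubits $AB$ is a maximally entangled two-qubit state, i.e. of the form $(U\otimes I)\tfrac{1}{\sqrt2}(|00\rangle+|11\rangle)$ for some $2\times2$ unitary $U$. Then the probability $p(\varphi)$ of this projection outcome satisfies $$\frac{\sin^2 2\theta\,\sin^2 2\eta}{4(1+\cos2\theta\cos2\eta)}\le p(\varphi)\le \frac{\sin^2 2\theta\,\sin^2 2\eta}{4(1-\cos2\theta\cos2\eta)}.$$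
   Context: For $\lambda\in[0,\tfrac{\pi}{2}]$, $|\Phi_\lambda\rangle=\cos\lambda|00\rangle+\sin\lambda|11\rangle$. Alice holds qubit $A$, Clare holds qubits $C_1$ (entangled initially with $A$) and $C_2$ (entangled initially with $B$), Bob holds qubit $B$. The probability of projecting Clare's system onto $|\varphi\rangle$ is $p(\varphi)=\|(\langle\varphi|_{C_1C_2}\otimes I_{AB})|\Phi_\theta\rangle_{AC_1}|\Phi_\eta\rangle_{C_2B}\|^2$. *)

(* Defs.v *)
From Stdlib Require Import Reals Lra.
Open Scope R_scope.

Record Cx := mkC { re : R; im : R }.
Definition C0 : Cx := mkC 0 0.
Definition C1 : Cx := mkC 1 0.
Definition RtoC (r : R) : Cx := mkC r 0.
Definition Cadd (z w : Cx) : Cx := mkC (re z + re w) (im z + im w).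
Definition Cmul (z w : Cx) : Cx :=
  mkC (re z * re w - im z * im w) (re z * im w + im z * re w).
Definition Cconj (z : Cx) : Cx := mkC (re z) (- im z).
Definition Cscale (r : R) (z : Cx) : Cx := mkC (r * re z) (r * im z).
Definition Cnorm2 (z : Cx) : R := re z ^ 2 + im z ^ 2.

(* qubit basis indices: false = |0>, true = |1> *)
Definition bsum (f : bool -> Cx) : Cx := Cadd (f false) (f true).
Definition rsum (f : bool -> R) : R := f false + f true.
Definition delta (i j : bool) : Cx := if Bool.eqb i j then C1 else C0.

(* |Phi_l> = cos l |00> + sin l |11>, as amplitudes (i j) *)
Definition Phi (l : R) (i j : bool) : Cx :=
  if Bool.eqb i j then (if i then RtoC (sin l) else RtoC (cos l)) else C0.

Definition unit_vec (phi : bool -> bool -> Cx) : Prop :=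
  rsum (fun i => rsum (fun j => Cnorm2 (phi i j))) = 1.

(* unnormalized AB state (<phi|_{C1C2} ⊗ I_{AB}) |Phi_th>_{AC1} |Phi_eta>_{C2B} *)
Definition post_state (th eta : R) (phi : bool -> bool -> Cx) (a b : bool) : Cx :=
  bsum (fun c1 => bsum (fun c2 =>
    Cmul (Cconj (phi c1 c2)) (Cmul (Phi th a c1) (Phi eta c2 b)))).

Definition prob (th eta : R) (phi : bool -> bool -> Cx) : R :=
  rsum (fun a => rsum (fun b => Cnorm2 (post_state th eta phi a b))).

Definition unitary2 (U : bool -> bool -> Cx) : Prop :=
  forall i j, bsum (fun k => Cmul (Cconj (U k i)) (U k j)) = delta i j.

(* amplitudes of (U ⊗ I) (|00> + |11>)/sqrt 2 *)
Definition maxent_vec (U : bool -> bool -> Cx) (a b : bool) : Cx :=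
  Cscale (/ sqrt 2) (bsum (fun k => Cmul (U a k) (delta k b))).

Definition yields_maxent (th eta : R) (phi : bool -> bool -> Cx) : Prop :=
  0 < prob th eta phi /\
  exists U, unitary2 U /\
    forall a b, Cscale (/ sqrt (prob th eta phi)) (post_state th eta phi a b)
                = maxent_vec U a b.

(* Main.v *)
Require Import Defs.
From Stdlib Require Import Reals Lra Psatz.
Open Scope R_scope.

Definition tt (th : R) (a : bool) := if a then sin th else cos th.

Lemma post_norm th eta phi a b :
  Cnorm2 (post_state th eta phi a b) = Cnorm2 (phi a b) * (tt th a)^2 * (tt eta b)^2.
Proof.
  destruct a, b; unfold post_state, bsum, Phi, Cnorm2, Cmul, Cconj, Cadd, RtoC, C0, tt;
  simpl; ring.
Qed.

Lemma scale_norm r z : Cnorm2 (Cscale r z) = r^2 * Cnorm2 z.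
Proof. unfold Cnorm2, Cscale; simpl; ring. Qed.

Lemma maxent_norm U a b : Cnorm2 (maxent_vec U a b) = / 2 * Cnorm2 (U a b).
Proof.
  unfold maxent_vec; rewrite scale_norm.
  replace ((/ sqrt 2)^2) with (/2).
  2:{ rewrite <- (sqrt_sqrt 2) at 1 by lra. assert (sqrt 2 <> 0).
      { apply Rgt_not_eq. apply sqrt_lt_R0; lra. } field; auto. }
  f_equal. destruct b; unfold bsum, delta, Cnorm2, Cmul, Cadd, C1, C0; simpl; ring.
Qed.

Lemma inv_sqrt2 x : 0 < x -> (/ sqrt x)^2 = / x.
Proof.
  intros. rewrite <- (sqrt_sqrt x) at 2 by lra.
  assert (sqrt x <> 0) by (apply Rgt_not_eq; apply sqrt_lt_R0; lra). field; auto.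
Qed.

Lemma Cnorm2_ge0 z : 0 <= Cnorm2 z.
Proof. unfold Cnorm2; nra. Qed.

Lemma Cnorm2_mul z w : Cnorm2 (Cmul z w) = Cnorm2 z * Cnorm2 w.
Proof. unfold Cnorm2, Cmul; simpl; ring. Qed.

Lemma Cnorm2_conj z : Cnorm2 (Cconj z) = Cnorm2 z.
Proof. unfold Cnorm2, Cconj; simpl; ring. Qed.

Theorem lemma3 (th eta : R) (phi : bool -> bool -> Cx) :
  0 < th <= PI / 4 -> 0 < eta <= PI / 4 ->
  unit_vec phi -> yields_maxent th eta phi ->
  (sin (2 * th)) ^ 2 * (sin (2 * eta)) ^ 2 / (4 * (1 + cos (2 * th) * cos (2 * eta)))
    <= prob th eta phi /\
  prob th eta phi <=
    (sin (2 * th)) ^ 2 * (sin (2 * eta)) ^ 2 / (4 * (1 - cos (2 * th) * cos (2 * eta))).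
Proof.
  intros Hth Het Hu [Hp [U [HU HM]]].
  set (p := prob th eta phi) in *.
  assert (key : forall a b, Cnorm2 (phi a b) * (tt th a)^2 * (tt eta b)^2
                            = p / 2 * Cnorm2 (U a b)).
  { intros a b. specialize (HM a b). apply (f_equal Cnorm2) in HM.
    rewrite scale_norm, maxent_norm, inv_sqrt2, post_norm in HM by lra.
    assert (Hp' : p <> 0) by lra.
    set (L := Cnorm2 (phi a b) * tt th a ^ 2 * tt eta b ^ 2) in *.
    replace L with (p * (/ p * L)) by (field; auto).
    rewrite HM. field. }
  assert (Hc1 : Cnorm2 (U false false) + Cnorm2 (U true false) = 1).
  { specialize (HU false false). apply (f_equal re) in HU.
    unfold bsum, delta, Cnorm2, Cmul, Cconj, Cadd, C1 in *; simpl in *; lra. }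
  assert (Hc2 : Cnorm2 (U false true) + Cnorm2 (U true true) = 1).
  { specialize (HU true true). apply (f_equal re) in HU.
    unfold bsum, delta, Cnorm2, Cmul, Cconj, Cadd, C1 in *; simpl in *; lra. }
  assert (Hoff : Cnorm2 (U false false) * Cnorm2 (U false true)
               = Cnorm2 (U true false) * Cnorm2 (U true true)).
  { specialize (HU false true).
    pose proof (f_equal re HU) as Hr. pose proof (f_equal im HU) as Hi.
    rewrite <- (Cnorm2_conj (U false false)), <- (Cnorm2_conj (U true false)),
      <- !Cnorm2_mul.
    unfold bsum, delta in Hr, Hi.
    set (w1 := Cmul (Cconj (U false false)) (U false true)) in *.
    set (w2 := Cmul (Cconj (U true false)) (U true true)) in *.
    cbn [Bool.eqb re im Cadd C0] in Hr, Hi.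
    assert (re w1 = - re w2) by lra. assert (im w1 = - im w2) by lra.
    unfold Cnorm2. rewrite H, H0. ring. }
  set (c := Cnorm2 (U false false)) in *.
  set (u10 := Cnorm2 (U true false)) in *.
  set (u01 := Cnorm2 (U false true)) in *.
  set (u11 := Cnorm2 (U true true)) in *.
  assert (E10 : u10 = 1 - c) by (clear -Hc1; lra).
  assert (E01 : u01 = 1 - c) by (rewrite E10 in Hoff; nra).
  assert (E11 : u11 = c) by lra.
  assert (c0 : 0 <= c) by apply Cnorm2_ge0.
  assert (u10p : 0 <= u10) by apply Cnorm2_ge0.
  assert (c1 : c <= 1) by lra.
  assert (st : 0 < sin th) by (apply sin_gt_0; pose proof PI_RGT_0; lra).
  assert (ct : 0 < cos th) by (apply cos_gt_0; pose proof PI_RGT_0; lra).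
  assert (se : 0 < sin eta) by (apply sin_gt_0; pose proof PI_RGT_0; lra).
  assert (ce : 0 < cos eta) by (apply cos_gt_0; pose proof PI_RGT_0; lra).
  assert (c2t : 0 <= cos (2*th)) by (apply cos_ge_0; pose proof PI_RGT_0; lra).
  assert (c2e : 0 <= cos (2*eta)) by (apply cos_ge_0; pose proof PI_RGT_0; lra).
  rewrite cos_2a in c2t, c2e.
  rewrite !sin_2a, !cos_2a.
  pose proof (sin2_cos2 th) as Pt. pose proof (sin2_cos2 eta) as Pe.
  unfold Rsqr in Pt, Pe.
  pose proof (key false false) as k00. pose proof (key false true) as k01.
  pose proof (key true false) as k10. pose proof (key true true) as k11.
  unfold tt in k00, k01, k10, k11. fold c u10 u01 u11 in k00, k01, k10, k11.
  unfold unit_vec, rsum in Hu.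
  set (a := cos th * cos th) in *. set (A := sin th * sin th) in *.
  set (b := cos eta * cos eta) in *. set (B := sin eta * sin eta) in *.
  replace ((2 * sin th * cos th)^2 * (2 * sin eta * cos eta)^2) with (16*(a*A*b*B))
    by (unfold a, A, b, B; ring).
  replace ((cos th)^2) with a in * by (unfold a; ring).
  replace ((sin th)^2) with A in * by (unfold A; ring).
  replace ((cos eta)^2) with b in * by (unfold b; ring).
  replace ((sin eta)^2) with B in * by (unfold B; ring).
  assert (a > 0) by (unfold a; nra). assert (A > 0) by (unfold A; nra).
  assert (b > 0) by (unfold b; nra). assert (B > 0) by (unfold B; nra).
  clearbody a A b B.
  assert (HA : A = 1 - a) by lra. assert (HB : B = 1 - b) by lra.
  set (P := a*b + A*B). set (Q := a*B + A*b).
  assert (PQ : P >= Q) by (unfold P, Q; nra).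
  assert (Pp : P > 0) by (unfold P; nra). assert (Qp : Q > 0) by (unfold Q; nra).
  assert (main : 2*(a*A*b*B) = p*(c*P + (1-c)*Q)).
  { unfold P, Q. rewrite E10 in k10. rewrite E01 in k01. rewrite E11 in k11.
    set (x00 := Cnorm2 (phi false false)) in *. set (x01 := Cnorm2 (phi false true)) in *.
    set (x10 := Cnorm2 (phi true false)) in *. set (x11 := Cnorm2 (phi true true)) in *.
    replace (2*(a*A*b*B)) with (2*(a*A*b*B)*(x00 + x01 + (x10 + x11))) by (rewrite Hu; ring).
    assert (2*(x00*a*b) = p*c) by lra. assert (2*(x01*a*B) = p*(1-c)) by lra.
    assert (2*(x10*A*b) = p*(1-c)) by lra. assert (2*(x11*A*B) = p*c) by lra.
    transitivity (A*B*(2*(x00*a*b)) + A*b*(2*(x01*a*B)) + a*B*(2*(x10*A*b))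
                  + a*b*(2*(x11*A*B))); [ring|].
    rewrite H3, H4, H5, H6. ring. }
  replace (4 * (1 + (a - A) * (b - B))) with (8*P) by (unfold P; subst A B; ring).
  replace (4 * (1 - (a - A) * (b - B))) with (8*Q) by (unfold Q; subst A B; ring).
  split.
  - apply (Rmult_le_reg_r (8*P)); [lra|]. unfold Rdiv.
    rewrite Rmult_assoc, Rinv_l by lra.
    assert (0 <= p*(1-c)*(P-Q)) by (apply Rmult_le_pos; [apply Rmult_le_pos|]; lra).
    lra.
  - apply (Rmult_le_reg_r (8*Q)); [lra|]. unfold Rdiv.
    rewrite Rmult_assoc, Rinv_l by lra.
    assert (0 <= p*c*(P-Q)) by (apply Rmult_le_pos; [apply Rmult_le_pos|]; lra).
    lra.
Qed.
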